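(* Suppose the nontrivial move problem has been solved: each agent $a$ holds a direction $\mathrm{dir}_a\in\{\text{right},\text{left}\}$ such that the round in which every agent starts in direction $\mathrm{dir}_a$ is a nontrivial move. Then the direction agreement problem can be solved in $O(1)$ further rounds. This holds even when the agents have no IDs.
   Context: Model: $n>4$ agents are at distinct, arbitrary initial positions on a circle of circumference $1$ and act in synchronised unit-time rounds. Each agent has its own notion of right (clockwise) and left; these need not be consistent across agents. At the start of a round each agent chooses a direction and moves at unit speed. Agents never pass: colliding moving agents instantly reverse direction. There is no communication. At the end of each round an agent learns the clockwise distance, in its own orientation, from its start-of-round to its end-of-round position. Rotation index: if $n_C$ agents start clockwise and $n_A$ anticlockwise (objective orientation), each agent moves to the initial position of the agent $(n_C-n_A)\bmod n$ places clockwise; this is the rotation index. A nontrivial move is a round whose rotation index is not in $\{0,n/2\}$. The direction agreement problem is solved when all agents hold a coherent view of which direction is clockwise. *)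

(* Defs.v *)
From HB Require Import structures.
From mathcomp Require Import all_boot all_order all_algebra.
From mathcomp Require Import reals.
Set Implicit Arguments. Unset Strict Implicit. Unset Printing Implicit Defensive.
Import Order.TTheory GRing.Theory Num.Theory.
Local Open Scope ring_scope.

(* Convention: the circle is [0,1); clockwise = increasing coordinate.
   Booleans for directions: true = right (in the agent's own frame).
   sigma a = true  iff  agent a's "right" is the objective clockwise. *)

Definition dist_cw (R : realFieldType) (u v : R) : R :=
  if u <= v then v - u else v - u + 1.

Definition local_dist (R : realFieldType) (s : bool) (u v : R) : R :=
  if s then dist_cw u v else dist_cw v u.

(* rotation index (n_C - n_A) mod n, where cw a says agent a moves
   objectively clockwise in the round *)
Definition rotation_index (n : nat) (cw : 'I_n -> bool) : nat :=
  ((#|[pred a | cw a]| + (n - #|[pred a | ~~ cw a]|)) %% n)%N.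

Definition nontrivial_index (n r : nat) : bool := (r != 0%N) && (r.*2 != n).

(* An anonymous deterministic protocol: every agent runs the same rules.
   Inputs: n, the agent's own dir_a, and the list of its observations so far
   (the clockwise distances, in its own orientation, of the previous rounds).
   pmove gives the direction (true = own right) for the next round;
   pout gives the agent's final answer "my right is clockwise". *)
Record protocol (R : Type) := Protocol {
  pmove : nat -> bool -> seq R -> bool;
  pout  : nat -> bool -> seq R -> bool }.

Section Exec.
Variables (R : realType) (P : protocol R) (n : nat) (x : nat -> R)
          (sigma dir : 'I_n -> bool).
(* Agents are labelled by their initial slot: agent a starts at position x a,
   where slots 0..n-1 are in clockwise order.  State: cumulative rotation S
   (agent a is at slot (a + cs) mod n) and histories of observations. *)

Definition objcw (h : 'I_n -> seq R) (a : 'I_n) : bool :=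
  pmove P n (dir a) (h a) == sigma a.

Definition step (st : nat * ('I_n -> seq R)) : nat * ('I_n -> seq R) :=
  let: (cs, h) := st in
  let r := rotation_index (objcw h) in
  (((cs + r) %% n)%N,
   fun a => rcons (h a)
     (local_dist (sigma a) (x ((a + cs) %% n)%N) (x ((a + cs + r) %% n)%N))).

Definition run (t : nat) : nat * ('I_n -> seq R) :=
  iter t step (0%N, fun _ => [::]).

Definition answers (t : nat) (a : 'I_n) : bool :=
  pout P n (dir a) ((run t).2 a).
End Exec.

Definition coherent (n : nat) (sigma b : 'I_n -> bool) : Prop :=
  forall a a' : 'I_n, (b a == sigma a) = (b a' == sigma a').

(* Main.v *)
Require Import Defs.
From HB Require Import structures.
From mathcomp Require Import all_boot all_order all_algebra.
From mathcomp Require Import reals.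
From mathcomp Require Import zify ring lra.
Import Order.TTheory GRing.Theory Num.Theory.
Local Open Scope ring_scope.

Lemma m1 n m : (n <= m < n + n)%N -> (m %% n = m - n)%N.
Proof. move=> /andP[H1 H2]. rewrite -{1}(subnK H1) modnDr modn_small //; lia. Qed.
Lemma m3 n m : (n + n <= m < n + n + n)%N -> (m %% n = m - (n + n))%N.
Proof. move=> /andP[H1 H2]. rewrite -{1}(subnK H1) addnA modnDr modnDr modn_small //; lia. Qed.

Lemma t n a r (ha : (a < n)%N) (h0 : (0 < r)%N) (hr : (r < n)%N) (h2 : (r + r < n)%N) :
  ((((a + r) %% n) < a) + (((a + r + r) %% n) < ((a + r) %% n)) == 0)%N || ((((a + r) %% n < a) + ((a + r + r) %% n < (a + r) %% n) == 1) && ((a + r + r) %% n < a))%N.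
Proof.
have [H1|H1] := ltnP (a + r) n.
  rewrite (modn_small H1).
  have [H3|H3] := ltnP (a + r + r) n.
    rewrite (modn_small H3); case: ltnP; case: ltnP => /=; lia.
  rewrite m1; last lia. case: ltnP; case: ltnP => /=; lia.
rewrite (m1 n (a+r)); last lia.
rewrite m1; last lia. case: ltnP; case: ltnP => /=; lia.
Qed.
Lemma t' n a r (ha : (a < n)%N) (h0 : (0 < r)%N) (hr : (r < n)%N) (h2 : (n < r + r)%N) :
  ((((a + r) %% n) < a) + (((a + r + r) %% n) < ((a + r) %% n)) == 2)%N || ((((a + r) %% n < a) + ((a + r + r) %% n < (a + r) %% n) == 1) && (a < (a + r + r) %% n))%N.
Proof.
have [H1|H1] := ltnP (a + r) n.
  rewrite (modn_small H1).
  rewrite m1; last lia. case: ltnP; case: ltnP => /=; lia.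
rewrite (m1 n (a+r)); last lia.
have [H3|H3] := ltnP (a + r + r) (n + n).
  rewrite m1; last lia. case: ltnP; case: ltnP => /=; lia.
rewrite m3; last lia. case: ltnP; case: ltnP => /=; lia.
Qed.

Lemma dneq n b r : (0 < r)%N -> (r < n)%N -> ((b + r) %% n != b %% n)%N.
Proof.
move=> h0 hr; rewrite -modnDml.
have hb : (b %% n < n)%N by rewrite ltn_pmod //; lia.
move: (b %% n)%N hb => c hc.
have [H1|H1] := ltnP (c + r) n.
  rewrite (modn_small H1); lia.
rewrite m1; lia.
Qed.

Lemma dcw (R : realType) n (x : nat -> R)
  (Hmono : forall i j : nat, (i < j < n)%N -> x i < x j) i j :
  (i < n)%N -> (j < n)%N -> dist_cw (x i) (x j) = x j - x i + (j < i)%N%:R.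
Proof.
move=> hi hj; rewrite /dist_cw.
have [H|H|H] := ltngtP i j.
- have -> : x i <= x j by apply: ltW; apply: Hmono; lia.
  by rewrite addr0.
- have -> : (x i <= x j) = false by rewrite leNgt Hmono //; lia.
  by [].
- by subst; rewrite lexx addr0.
Qed.

Lemma finish (R : realType) (s : R) (b : bool) :
  (b -> s < 1) -> (~~ b -> 1 < s) -> (s < 1) = b.
Proof.
case: b => [H _|_ H]; first by rewrite H.
by apply/negbTE; rewrite -leNgt ltW // H.
Qed.

Theorem lemma6 :
  exists K : nat, forall R : realType, exists P : protocol R,
  forall (n : nat) (x : nat -> R) (sigma dir : 'I_n -> bool),
    (4 < n)%N ->
    (forall i : nat, (i < n)%N -> 0 <= x i < 1) ->
    (forall i j : nat, (i < j < n)%N -> x i < x j) ->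
    nontrivial_index n ((rotation_index (fun a : 'I_n => dir a == sigma a))) ->
    coherent sigma (answers P x sigma dir K).
Proof.
exists 2%N => R.
exists (Protocol (fun _ d _ => d) (fun _ _ h => nth 0 h 0 + nth 0 h 1 < (1 : R))).
move=> n x sigma dir Hn Hx Hmono Hnt.
set r := rotation_index _ in Hnt.
have rlt : (r < n)%N by rewrite /r /rotation_index ltn_pmod //; lia.
have r0 : (0 < r)%N by move: Hnt => /andP[] /eqP; lia.
have r2 : (r + r != n)%N by move: Hnt => /andP[] _; rewrite addnn.
have key : forall a : 'I_n, (answers (Protocol (fun _ d _ => d) (fun _ _ h => nth 0 h 0 + nth 0 h 1 < (1 : R))) x sigma dir 2 a == sigma a) = (r + r < n)%N.
  move=> a. rewrite /answers /run /= -/r addn0 add0n (modn_small rlt) (modn_small (ltn_ord a)).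
  have ha := ltn_ord a.
  move: (nat_of_ord a) ha => a' ha.
  set p1 := ((a' + r) %% n)%N; set p2 := ((a' + r + r) %% n)%N.
  have hp1 : (p1 < n)%N by rewrite ltn_pmod //; lia.
  have hp2 : (p2 < n)%N by rewrite ltn_pmod //; lia.
  have d1 : p1 <> a'.
    move: (dneq n a' r r0 rlt); rewrite (modn_small ha) => /eqP; done.
  have d2 : p2 <> p1 by move: (dneq n (a' + r) r r0 rlt) => /eqP.
  have [xa1 xa2] := andP (Hx _ ha).
  have [xp11 xp12] := andP (Hx _ hp1).
  have [xp21 xp22] := andP (Hx _ hp2).
  have cases : ((r + r < n)%N -> (((p1 < a') + (p2 < p1) == 0)%N || (((p1 < a') + (p2 < p1) == 1)%N && (p2 < a')%N)))
             /\ (~~ (r + r < n)%N -> (((p1 < a') + (p2 < p1) == 2)%N || (((p1 < a') + (p2 < p1) == 1)%N && (a' < p2)%N))).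
    split => h; first exact: t.
    apply: t' => //; lia.
  have F1 : (a' < p1)%N = ~~ (p1 < a')%N by lia.
  have F2 : (p1 < p2)%N = ~~ (p2 < p1)%N by lia.
  have ord1 : (p2 < a')%N -> x p2 < x a' by move=> h; apply: Hmono; lia.
  have ord2 : (a' < p2)%N -> x a' < x p2 by move=> h; apply: Hmono; lia.
  case: cases => c1 c2.
  case: (sigma a); rewrite /local_dist !(dcw _ _ _ Hmono) // ?F1 ?F2.
    rewrite eqb_id; apply: finish => h; [move: (c1 h)|move: (c2 h)];
    case: (p1 < a')%N; case: (p2 < p1)%N => //= H;
    rewrite ?mulr1n ?mulr0n; try lra.
      by have := ord1 H; lra.
      by have := ord1 H; lra.
      by have := ord2 H; lra.
      by have := ord2 H; lra.
  rewrite eqbF_neg -[X in _ = X]negbK; congr (~~ _).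
  apply: finish => h; [move: (c2 h)|move: (c1 (negbNE h))];
    case: (p1 < a')%N; case: (p2 < p1)%N => //= H;
    rewrite ?mulr1n ?mulr0n; try lra.
      by have := ord2 H; lra.
      by have := ord2 H; lra.
      by have := ord1 H; lra.
      by have := ord1 H; lra.
move=> a b; by rewrite !key.
Qed.
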